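(* Let $\mathcal{A}$ be a family of finite subsets of $\omega_1$ closed under taking subsets and containing all singletons, and let $\mathcal{D}$ be a family of finite sets of consecutive pairs containing every single pair of $\omega_1$. Then $(\mathcal{X}_{\mathcal{A},\mathcal{D}},\|\cdot\|_{\mathcal{A},\mathcal{D}})$ is a Hilbert generated Banach space.
   Context: $c_{00}(\omega_1)$ is the set of finitely supported $x\in\mathbb{R}^{\omega_1}$; $\|x\|_\mathcal{A}=\sup_{A\in\mathcal{A}}\sqrt{\sum_{\alpha\in A}x(\alpha)^2}$. A set of consecutive pairs is a set $D$ of two-element subsets of $\omega_1$ such that for distinct $a,b\in D$, $\max a<\min b$ or $\max b<\min a$; ''$\mathcal{D}$ contains every single pair'' means $\{p\}\in\mathcal{D}$ for every two-element $p\subseteq\omega_1$. $\nu_\mathcal{D}(x)=\sup_{D\in\mathcal{D}}\sqrt{\sum_{\{\alpha,\beta\}\in D}|x(\alpha)-x(\beta)|^2}$, $\|x\|_{\mathcal{A},\mathcal{D}}=\nu_\mathcal{D}(x)+\|x\|_\mathcal{A}$, and $\mathcal{X}_{\mathcal{A},\mathcal{D}}$ is the completion of $c_{00}(\omega_1)$ with respect to $\|\cdot\|_{\mathcal{A},\mathcal{D}}$ (realized as the closure of $c_{00}(\omega_1)$ in $\{x\in\mathbb{R}^{\omega_1}:\|x\|_{\mathcal{A},\mathcal{D}}<\infty\}$). A Banach space is Hilbert generated if it is the dense range of a bounded linear operator from a Hilbert space. *)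

(* Defs.v *)
From HB Require Import structures.
From mathcomp Require Import all_boot all_order all_algebra.
From mathcomp Require Import all_classical all_reals all_analysis.
Set Implicit Arguments. Unset Strict Implicit. Unset Printing Implicit Defensive.
Import Order.TTheory GRing.Theory Num.Theory.
Import numFieldNormedType.Exports.
Local Open Scope classical_set_scope.
Local Open Scope ring_scope.

Section Defs.
Context {d : Order.disp_t} (W : orderType d) (R : realType).

Definition is_omega1 : Prop :=
  [/\ well_founded (fun a b : W => (a < b)%O),
      ~ countable [set: W]
    & forall a : W, countable [set b : W | (b < a)%O]].

(* A pair {a,b} with a < b is represented as the ordered pair (a,b). *)
Definition consecutive_pairs (P : set (W * W)) : Prop :=
  (forall p, P p -> (p.1 < p.2)%O) /\
  (forall p q, P p -> P q -> p <> q -> (p.2 < q.1)%O \/ (q.2 < p.1)%O).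

Definition c00 : set (W -> R) := [set x | finite_set [set a | x a != 0]].

Definition normA (A : set (set W)) (x : W -> R) : \bar R :=
  ereal_sup [set (Num.sqrt (\sum_(a \in S) x a ^+ 2))%:E | S in A].

Definition nuD (D : set (set (W * W))) (x : W -> R) : \bar R :=
  ereal_sup [set (Num.sqrt (\sum_(p \in P) (x p.1 - x p.2) ^+ 2))%:E | P in D].

Definition normAD A D (x : W -> R) : \bar R := (nuD D x + normA A x)%E.

Definition XAD A D : set (W -> R) :=
  [set x | (normAD A D x < +oo)%E /\
     forall eps : R, 0 < eps ->
       exists y, c00 y /\ (normAD A D (fun w => (x w - y w)%R) < eps%:E)%E].

Definition banach_subspace (N : (W -> R) -> \bar R) (X : set (W -> R)) : Prop :=
  X (fun _ => 0) /\
      (forall (a : R) x y, X x -> X y -> X (fun w => a * x w + y w)) /\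
      (forall x, X x -> (N x < +oo)%E) /\
      (forall x, X x -> (N x = 0)%E -> forall w, x w = 0) /\
      (forall (a : R) x, X x -> N (fun w => (a * x w)%R) = (`|a|%:E * N x)%E) /\
      (forall x y, X x -> X y -> (N (fun w => (x w + y w)%R) <= N x + N y)%E)
    /\ (forall u : nat -> W -> R, (forall n, X (u n)) ->
        (forall eps : R, 0 < eps -> exists M, forall m n, (M <= m)%N -> (M <= n)%N ->
            (N (fun w => (u m w - u n w)%R) < eps%:E)%E) ->
        exists x, X x /\ forall eps : R, 0 < eps -> exists M, forall n, (M <= n)%N ->
            (N (fun w => (u n w - x w)%R) < eps%:E)%E).

End Defs.

Definition inner_product_of (R : realType) (H : normedModType R) (ip : H -> H -> R) : Prop :=
  [/\ (forall u v, ip u v = ip v u),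
      (forall (a : R) u v w, ip (a *: u + v) w = a * ip u w + ip v w)
    & (forall u, `|u| = Num.sqrt (ip u u))].

Definition hilbert_generated {d : Order.disp_t} (W : orderType d) (R : realType)
    (N : (W -> R) -> \bar R) (X : set (W -> R)) : Prop :=
  exists (H : completeNormedModType R) (ip : H -> H -> R),
    inner_product_of ip /\
    exists T : H -> (W -> R),
      [/\ (forall (a : R) u v, T (a *: u + v) = (fun w => (a * T u w + T v w)%R)),
          (exists C : R, forall u, (N (T u) <= (C * `|u|)%:E)%E),
          (forall u, X (T u))
        & (forall x, X x -> forall eps : R, 0 < eps ->
            exists u, (N (fun w => (x w - T u w)%R) < eps%:E)%E)].

(* Main.v *)
Require Import Defs.
From HB Require Import structures.
From mathcomp Require Import all_boot all_order all_algebra.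
From mathcomp Require Import all_classical all_reals all_analysis.
From mathcomp Require Import ring lra.
Set Implicit Arguments. Unset Strict Implicit. Unset Printing Implicit Defensive.
Import Order.TTheory GRing.Theory Num.Theory.
Import numFieldNormedType.Exports.
Local Open Scope classical_set_scope.
Local Open Scope ring_scope.
Section NPsec.
Context {W : choiceType} {R : realType}.
Implicit Types (P : set ((W -> R) -> R)).

Definition NP P (u : W -> R) : \bar R := ereal_sup [set (p u)%:E | p in P].

Definition goodP P :=
  [/\ P !=set0,
      (forall p, P p -> forall a u, p (fun w => a * u w) = `|a| * p u),
      (forall p, P p -> forall u v, p (fun w => u w + v w) <= p u + p v),
      (forall p, P p -> exists ws : seq W, forall u, p u <= \sum_(w <- ws) `|u w|) &
      (forall w, exists2 p, P p & forall u, `|u w| <= p u)].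

Definition goodW P :=
  [/\ P !=set0,
      (forall p, P p -> forall a u, p (fun w => a * u w) = `|a| * p u),
      (forall p, P p -> forall u v, p (fun w => u w + v w) <= p u + p v) &
      (forall p, P p -> exists ws : seq W, forall u, p u <= \sum_(w <- ws) `|u w|)].

Lemma goodP_ge0W P p : goodW P -> P p -> forall u, 0 <= p u.
Proof.
case=> _ HZ HD _ Pp u.
have h0 : p (fun w => 0 * u w) = 0 by rewrite HZ // normr0 mul0r.
have : p (fun w => u w + (fun w => -1 * u w) w) <= p u + p (fun w => -1 * u w) by apply: HD.
have -> : (fun w => u w + (fun w => -1 * u w) w) = (fun w => 0 * u w).
  by apply/funext => w /=; rewrite mulN1r subrr mul0r.
by rewrite h0 HZ // normrN normr1 mul1r; lra.
Qed.

Lemma goodP_ge0 P p : goodP P -> P p -> forall u, 0 <= p u.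
Proof.
case=> _ HZ HD _ _ Pp u.
have h0 : p (fun w => 0 * u w) = 0 by rewrite HZ // normr0 mul0r.
have : p (fun w => u w + (fun w => -1 * u w) w) <= p u + p (fun w => -1 * u w) by apply: HD.
have -> : (fun w => u w + (fun w => -1 * u w) w) = (fun w => 0 * u w).
  by apply/funext => w /=; rewrite mulN1r subrr mul0r.
by rewrite h0 HZ // normrN normr1 mul1r; lra.
Qed.

Lemma NP_ub P p u : P p -> ((p u)%:E <= NP P u)%E.
Proof. by move=> Pp; apply: ereal_sup_ubound; exists p. Qed.

Lemma NP_le P u r : (NP P u <= r%:E)%E <-> forall p, P p -> p u <= r.
Proof.
split.
  by move=> H p Pp; rewrite -lee_fin; apply: le_trans H; exact: NP_ub.
by move=> H; apply/ereal_supP => _ [p Pp <-]; rewrite lee_fin; exact: H.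
Qed.

Lemma NP_ge0 P u : goodP P -> (0 <= NP P u)%E.
Proof.
move=> gP; have [[p Pp] _ _ _ _] := gP.
by apply: le_trans _ (NP_ub u Pp); rewrite lee_fin; exact: goodP_ge0 gP Pp u.
Qed.

Lemma NP_lt P u r : (NP P u < r%:E)%E -> forall p, P p -> p u < r.
Proof. by move=> H p Pp; rewrite -lte_fin; exact: le_lt_trans (NP_ub u Pp) H. Qed.

Lemma NP_Z P a u : goodP P -> NP P (fun w => a * u w) = (`|a|%:E * NP P u)%E.
Proof.
move=> gP; have [[p0 Pp0] HZ _ _ _] := gP.
rewrite /NP -ereal_supZl //; last first.
  by apply/set0P; exists (p0 u)%:E; exists p0.
congr ereal_sup; apply/seteqP; split => x /=.
  case=> p Pp <-; exists (p u)%:E; first by exists p.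
  by rewrite HZ.
by case=> _ [p Pp <-] <-; exists p => //; rewrite HZ.
Qed.

Lemma NP_D P (u v : W -> R) : goodP P -> (NP P (fun w => (u w + v w)%R) <= NP P u + NP P v)%E.
Proof.
move=> gP; have [_ _ HD _ _] := gP.
apply/ereal_supP => _ [p Pp <-].
apply: le_trans _ (leeD (NP_ub u Pp) (NP_ub v Pp)).
by rewrite -EFinD lee_fin; exact: HD.
Qed.

Lemma NP_coord P u w : goodP P -> ((`|u w|)%:E <= NP P u)%E.
Proof.
move=> gP; have [_ _ _ _ HC] := gP; have [p Pp Hp] := HC w.
by apply: le_trans _ (NP_ub u Pp); rewrite lee_fin.
Qed.

Lemma NP_eq0 P u : goodP P -> NP P u = 0%E -> forall w, u w = 0.
Proof.
move=> gP H w; have := NP_coord u w gP; rewrite H lee_fin => h.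
by apply/normr0_eq0/le_anti; rewrite h normr_ge0.
Qed.

Lemma NP_fin P u : goodP P -> (NP P u < +oo)%E -> NP P u = (fine (NP P u))%:E.
Proof.
move=> gP H; rewrite fineK // ge0_fin_numE //; exact: NP_ge0.
Qed.

Lemma NP_ge0W P u : goodW P -> (0 <= NP P u)%E.
Proof.
move=> gP; have [[p Pp] _ _ _] := gP.
by apply: le_trans _ (NP_ub u Pp); rewrite lee_fin; exact: goodP_ge0W gP Pp u.
Qed.

Lemma NP_finW P u : goodW P -> (NP P u < +oo)%E -> NP P u = (fine (NP P u))%:E.
Proof.
move=> gP H; rewrite fineK // ge0_fin_numE //; exact: NP_ge0W.
Qed.

End NPsec.
Lemma R_cauchy (R : realType) (v : nat -> R) :
  (forall e : R, 0 < e -> exists M, forall m n, (M <= m)%N -> (M <= n)%N -> `|v m - v n| < e) ->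
  exists l, forall e : R, 0 < e -> exists M, forall n, (M <= n)%N -> `|v n - l| < e.
Proof.
move=> Hc.
have : cvg (v @ \oo).
  suff : cauchy (v @ \oo) by exact: cauchy_cvg.
  suff : cauchy_ex (v @ \oo) by exact: cauchy_exP.
  move=> e e0; rewrite /fmapE -ball_normE /ball_.
  have [M HM] := Hc e e0.
  exists (v M), M => // m Mm /=. exact: HM.
rewrite cvg_ex /= => -[l Hl]; exists l => e e0.
move/cvgrPdist_lt: Hl => /(_ e e0).
case=> M _ HM; exists M => n Mn; rewrite distrC; exact: HM.
Qed.

Section NPcomplete.
Context {W : choiceType} {R : realType}.
Implicit Types (P : set ((W -> R) -> R)).

Lemma seq_conv (v : nat -> W -> R) (x : W -> R) (ws : seq W) :
  (forall w e, 0 < e -> exists M, forall n, (M <= n)%N -> `|v n w - x w| < e) ->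
  forall e, 0 < e -> exists M, forall n, (M <= n)%N -> \sum_(w <- ws) `|v n w - x w| < e.
Proof.
move=> H; elim: ws => [|w ws IH] e e0.
  by exists 0%N => n _; rewrite big_nil.
have e2 : 0 < e / 2 by rewrite divr_gt0.
have [M1 H1] := H w _ e2; have [M2 H2] := IH _ e2.
exists (maxn M1 M2) => n; rewrite geq_max => /andP[n1 n2].
rewrite big_cons; have := H1 n n1; have := H2 n n2; lra.
Qed.

Lemma NP_complete P : goodP P -> forall u : nat -> W -> R,
  (forall e : R, 0 < e -> exists M, forall m n, (M <= m)%N -> (M <= n)%N ->
      (NP P (fun w => (u m w - u n w)%R) < e%:E)%E) ->
  exists x : W -> R, forall e : R, 0 < e -> exists M, forall n, (M <= n)%N ->
      (NP P (fun w => (u n w - x w)%R) < e%:E)%E.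
Proof.
move=> gP u Hc; have [_ _ HD Hloc HC] := gP.
have Hpt : forall w, exists l, forall e : R, 0 < e -> exists M, forall n, (M <= n)%N ->
    `|u n w - l| < e.
  move=> w; apply: R_cauchy => e e0; have [M HM] := Hc e e0; exists M => m n Mm Mn.
  rewrite -lte_fin; apply: le_lt_trans (HM m n Mm Mn).
  exact: (NP_coord (fun w => u m w - u n w) w gP).
have [x Hx] := choice Hpt.
exists x => e e0.
have e2 : 0 < e / 2 by rewrite divr_gt0.
have [M HM] := Hc _ e2.
exists M => n Mn.
apply: (@le_lt_trans _ _ (e / 2)%:E); last by rewrite lte_fin; lra.
apply/NP_le => p Pp.
have [ws Hws] := Hloc p Pp.
apply/ler_addgt0Pr => d d0.
have [K HK] := seq_conv ws Hx d0.
pose m := maxn M K.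
have Mm : (M <= m)%N by rewrite leq_maxl.
have Km : (K <= m)%N by rewrite leq_maxr.
have -> : (fun w => u n w - x w) =
   (fun w => (fun w => u n w - u m w) w + (fun w => u m w - x w) w).
  by apply/funext => w /=; rewrite addrA subrK.
apply: le_trans (HD p Pp _ _) _.
have h1 := NP_lt (HM n m Mn Mm) Pp.
have h2 := Hws (fun w => u m w - x w).
have h3 := HK m Km.
lra.
Qed.

End NPcomplete.
Section SeqIneq.
Context {R : realType} {I : Type}.
Implicit Types (s : seq I) (f h : I -> R).

Lemma sumsq_ge0 s f : 0 <= \sum_(i <- s) f i ^+ 2.
Proof. by apply: sumr_ge0 => i _; exact: sqr_ge0. Qed.

Lemma sumsq_le_sqr s f : \sum_(i <- s) f i ^+ 2 <= (\sum_(i <- s) `|f i|) ^+ 2.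
Proof.
elim: s => [|i s IH]; first by rewrite !big_nil expr0n.
rewrite !big_cons.
have h0 : 0 <= \sum_(j <- s) `|f j| by apply: sumr_ge0 => j _.
have h1 : 0 <= `|f i| by [].
have h2 : f i ^+ 2 = `|f i| ^+ 2 by rewrite real_normK // num_real.
rewrite h2; nra.
Qed.

Lemma sqrt_le_sum s f : Num.sqrt (\sum_(i <- s) f i ^+ 2) <= \sum_(i <- s) `|f i|.
Proof.
have h0 : 0 <= \sum_(j <- s) `|f j| by apply: sumr_ge0 => j _.
rewrite -(ger0_norm h0) -sqrtr_sqr; apply: ler_wsqrtr; exact: sumsq_le_sqr.
Qed.

Lemma quad_id s f h t : \sum_(i <- s) (t * f i + h i) ^+ 2 =
  t ^+ 2 * \sum_(i <- s) f i ^+ 2 + 2 * t * \sum_(i <- s) f i * h i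
  + \sum_(i <- s) h i ^+ 2.
Proof.
rewrite !mulr_sumr -!big_split /=; apply: eq_bigr => i _; rewrite mulrA; ring.
Qed.

Lemma CS_sq s f h : (\sum_(i <- s) f i * h i) ^+ 2 <=
  (\sum_(i <- s) f i ^+ 2) * (\sum_(i <- s) h i ^+ 2).
Proof.
set A := \sum_(i <- s) f i ^+ 2; set B := \sum_(i <- s) h i ^+ 2.
set C := \sum_(i <- s) f i * h i.
have Q t : 0 <= t ^+ 2 * A + 2 * t * C + B.
  by rewrite -quad_id; exact: sumsq_ge0.
have A0 : 0 <= A by exact: sumsq_ge0.
have B0 : 0 <= B by exact: sumsq_ge0.
have [Ap|A0'] := ltrP 0 A.
  have := Q (- C / A).
  have -> : (- C / A) ^+ 2 * A + 2 * (- C / A) * C + B = B - C ^+ 2 / A.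
    by field; rewrite gt_eqF.
  rewrite subr_ge0 ler_pdivrMr // => H; rewrite mulrC; exact: H.
have A00 : A = 0 by apply/le_anti; rewrite A0' A0.
rewrite A00 mul0r.
have [C0|C0] := eqVneq C 0; first by rewrite C0 expr0n.
have := Q (- (B + 1) / (2 * C)).
have -> : (- (B + 1) / (2 * C)) ^+ 2 * A + 2 * (- (B + 1) / (2 * C)) * C + B = -1.
  by rewrite A00; field.
lra.
Qed.

Lemma CS s f h : \sum_(i <- s) f i * h i <=
  Num.sqrt (\sum_(i <- s) f i ^+ 2) * Num.sqrt (\sum_(i <- s) h i ^+ 2).
Proof.
rewrite -sqrtrM ?sumsq_ge0 //.
apply: le_trans (ler_norm _) _.
rewrite -sqrtr_sqr; apply: ler_wsqrtr; exact: CS_sq.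
Qed.

Lemma minkowski s f h : Num.sqrt (\sum_(i <- s) (f i + h i) ^+ 2) <=
  Num.sqrt (\sum_(i <- s) f i ^+ 2) + Num.sqrt (\sum_(i <- s) h i ^+ 2).
Proof.
have := CS s f h.
have := quad_id s f h 1.
under eq_bigr do rewrite mul1r.
rewrite expr1n mul1r mulr1 => ->.
set A := \sum_(i <- s) f i ^+ 2; set B := \sum_(i <- s) h i ^+ 2.
set C := \sum_(i <- s) f i * h i => HC.
have A0 : 0 <= A by exact: sumsq_ge0.
have B0 : 0 <= B by exact: sumsq_ge0.
have sA := sqrtr_ge0 A; have sB := sqrtr_ge0 B.
have eA : Num.sqrt A ^+ 2 = A by rewrite sqr_sqrtr.
have eB : Num.sqrt B ^+ 2 = B by rewrite sqr_sqrtr.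
have h0 : 0 <= Num.sqrt A + Num.sqrt B by rewrite addr_ge0.
rewrite -(ger0_norm h0) -sqrtr_sqr; apply: ler_wsqrtr.
nra.
Qed.

End SeqIneq.
Section Pqsec.
Context {W : choiceType} {R : realType} {I : choiceType}.

Definition Pq (F : set (set I)) (g : (W -> R) -> I -> R) : set ((W -> R) -> R) :=
  [set (fun u => Num.sqrt (\sum_(i \in S) (g u i) ^+ 2)) | S in F].

Lemma seq_loc (g : (W -> R) -> I -> R) :
  (forall i, exists ws : seq W, forall u, `|g u i| <= \sum_(w <- ws) `|u w|) ->
  forall s : seq I, exists ws : seq W, forall u,
    \sum_(i <- s) `|g u i| <= \sum_(w <- ws) `|u w|.
Proof.
move=> gl; elim=> [|i s [ws IH]]; first by exists [::] => u; rewrite !big_nil.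
have [wi Hi] := gl i; exists (wi ++ ws) => u.
by rewrite big_cons big_cat /=; apply: lerD.
Qed.

Lemma goodPq (F : set (set I)) (g : (W -> R) -> I -> R) :
  F !=set0 -> (forall S, F S -> finite_set S) ->
  (forall a u i, g (fun w => a * u w) i = a * g u i) ->
  (forall u v i, g (fun w => u w + v w) i = g u i + g v i) ->
  (forall i, exists ws : seq W, forall u, `|g u i| <= \sum_(w <- ws) `|u w|) ->
  goodW (Pq F g).
Proof.
move=> [S0 FS0] Ffin gZ gD gl; split => //.
- by exists (fun u => Num.sqrt (\sum_(i \in S0) (g u i) ^+ 2)); exists S0.
- move=> _ [S FS <-] a u /=.
  have fS := Ffin S FS; rewrite !fsbig_finite //.
  under eq_bigr do rewrite gZ exprMn.
  by rewrite -mulr_sumr sqrtrM ?sqr_ge0 // sqrtr_sqr.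
- move=> _ [S FS <-] u v /=.
  have fS := Ffin S FS; rewrite !fsbig_finite //.
  under eq_bigr do rewrite gD.
  exact: minkowski.
- move=> _ [S FS <-].
  have [ws Hws] := seq_loc gl (finmap.enum_fset (fset_set S)).
  exists ws => u /=; have fS := Ffin S FS; rewrite fsbig_finite //.
  exact: le_trans (sqrt_le_sum _ _) (Hws u).
Qed.

End Pqsec.

Section Paddsec.
Context {W : choiceType} {R : realType}.
Implicit Types (P : set ((W -> R) -> R)).

Definition Padd P1 P2 : set ((W -> R) -> R) :=
  [set p | exists p1 p2, [/\ P1 p1, P2 p2 & p = fun u => p1 u + p2 u]].

Lemma goodPadd P1 P2 : goodW P1 -> goodP P2 -> goodP (Padd P1 P2).
Proof.
move=> g1 g2; have [[p1 P1p1] Z1 D1 L1] := g1; have [[p2 P2p2] Z2 D2 L2 C2] := g2.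
split.
- by exists (fun u => p1 u + p2 u); exists p1, p2.
- move=> _ [q1 [q2 [Pq1 Pq2 ->]]] a u /=; rewrite Z1 // Z2 //; ring.
- move=> _ [q1 [q2 [Pq1 Pq2 ->]]] u v /=.
  have := D1 _ Pq1 u v; have := D2 _ Pq2 u v; lra.
- move=> _ [q1 [q2 [Pq1 Pq2 ->]]].
  have [ws1 H1] := L1 _ Pq1; have [ws2 H2] := L2 _ Pq2.
  exists (ws1 ++ ws2) => u; rewrite big_cat /=; exact: lerD.
- move=> w; have [q2 Pq2 Hq2] := C2 w.
  exists (fun u => p1 u + q2 u); first by exists p1, q2.
  move=> u /=; have := goodP_ge0W g1 P1p1 u; have := Hq2 u; lra.
Qed.

Lemma ereal_le_ext (x y : \bar R) :
  (forall r : R, (x <= r%:E)%E <-> (y <= r%:E)%E) -> x = y.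
Proof.
case: x => [a| |]; case: y => [b| |] H //.
- congr EFin; apply/le_anti.
  have := (H b).2 (lexx _); have := (H a).1 (lexx _); rewrite !lee_fin => -> -> //.
- by have := (H a).1 (lexx _).
- by have := (H (a - 1)).2 (leNye _); rewrite lee_fin => h; exfalso; lra.
- by have := (H b).2 (lexx _).
- by have := (H 0).2 (leNye _).
- by have := (H (b - 1)).1 (leNye _); rewrite lee_fin => h; exfalso; lra.
- by have := (H 0).1 (leNye _).
Qed.

Lemma NP_add P1 P2 u : goodW P1 -> goodP P2 ->
  NP (Padd P1 P2) u = (NP P1 u + NP P2 u)%E.
Proof.
move=> g1 g2; apply: ereal_le_ext => r; rewrite NP_le; split => H.
- have [[p2 Pp2] _ _ _ _] := g2.
  have hfin : (NP P1 u <= (r - p2 u)%:E)%E.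
    apply/NP_le => p1 Pp1.
    have h := H (fun u => p1 u + p2 u) (ex_intro _ p1 (ex_intro _ p2 (And3 Pp1 Pp2 erefl))).
    simpl in h; lra.
  have fin1 : (NP P1 u < +oo)%E by apply: le_lt_trans hfin _; exact: ltey.
  rewrite (NP_finW g1 fin1).
  set c := fine (NP P1 u).
  have hc : forall p1 p2, P1 p1 -> P2 p2 -> p1 u + p2 u <= r.
    by move=> q1 q2 Pq1 Pq2; apply: (H (fun u => q1 u + q2 u)); exists q1, q2.
  have H2 : (NP P2 u <= (r - c)%:E)%E.
    apply/NP_le => q2 Pq2.
    have : (NP P1 u <= (r - q2 u)%:E)%E.
      by apply/NP_le => q1 Pq1; have := hc q1 q2 Pq1 Pq2; lra.
    rewrite (NP_finW g1 fin1) lee_fin -/c; lra.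
  by apply: le_trans (leeD (lexx _) H2) _; rewrite -EFinD lee_fin; lra.
- move=> _ [q1 [q2 [Pq1 Pq2 ->]]].
  rewrite -lee_fin EFinD; apply: le_trans H.
  exact: leeD (NP_ub _ Pq1) (NP_ub _ Pq2).
Qed.

End Paddsec.
Section fsb.
Context {T : choiceType} {R : realType}.
Implicit Types (S : set T) (f : T -> R).

Lemma fs_split S S0 f : finite_set S -> finite_set S0 ->
  \sum_(i \in S `|` S0) f i = \sum_(i \in S0) f i + \sum_(i \in S `\` S0) f i.
Proof.
move=> fS fS0.
have -> : S `|` S0 = S0 `|` (S `\` S0).
  apply/seteqP; split => x /=.
    by case: (pselect (S0 x)) => h; [left|case=> ?; [right|left]].
  by case=> [h|[h _]]; [right|left].
rewrite fsbigU //; first exact: sub_finite_set fS; first by move=> x [? []].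
Qed.

Lemma fs_mono S0 S f : finite_set S -> S0 `<=` S -> (forall i, S i -> 0 <= f i) ->
  \sum_(i \in S0) f i <= \sum_(i \in S) f i.
Proof.
move=> fS sub f0; have fS0 := sub_finite_set sub fS.
have -> : S = S `|` S0 by apply/seteqP; split => x /=; [left|case=> // /sub].
rewrite fs_split // lerDl; apply: fsumr_ge0 => i [Si _]; exact: f0.
Qed.

End fsb.

Section l2sec.
Context {W : choiceType} {R : realType}.

Definition P2 : set ((W -> R) -> R) := Pq (@finite_set W) (fun (u : W -> R) w => u w).

Lemma goodP2 : goodP P2.
Proof.
have [h1 h2 h3 h4] : goodW P2.
  apply: goodPq => //.
  - by exists set0.
  - by move=> i; exists [:: i] => u; rewrite big_seq1.
split => // w; exists (fun u => Num.sqrt (\sum_(i \in [set w]) (u i) ^+ 2)).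
  by exists [set w] => //; exact: finite_set1.
by move=> u; rewrite fsbig_set1 sqrtr_sqr.
Qed.

Lemma NP0 (P : set ((W -> R) -> R)) : goodP P -> NP P (fun _ => 0) = 0%E.
Proof.
move=> gP; have := NP_Z 0 (fun _ : W => 0 : R) gP.
rewrite normr0 mul0e => <-; congr NP; apply/funext => w; by rewrite mul0r.
Qed.

Lemma NPN (P : set ((W -> R) -> R)) u : goodP P -> NP P (fun w => - u w) = NP P u.
Proof.
move=> gP; have := NP_Z (-1) u gP.
rewrite normrN normr1 mul1e => <-; congr NP; apply/funext => w; by rewrite mulN1r.
Qed.

Lemma NP_D_fin (P : set ((W -> R) -> R)) u v : goodP P ->
  (NP P u < +oo)%E -> (NP P v < +oo)%E -> (NP P (fun w => (u w + v w)%R) < +oo)%E.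
Proof.
move=> gP hu hv; apply: le_lt_trans (NP_D u v gP) _; exact: lte_add_pinfty.
Qed.

Lemma NP_Z_fin (P : set ((W -> R) -> R)) a u : goodP P ->
  (NP P u < +oo)%E -> (NP P (fun w => (a * u w)%R) < +oo)%E.
Proof.
by move=> gP hu; rewrite NP_Z // (NP_fin gP hu) -EFinM ltry.
Qed.

Record l2 := L2 { l2v : W -> R; l2P : (NP P2 l2v < +oo)%E }.

Lemma l2_eq (u v : l2) : l2v u = l2v v -> u = v.
Proof.
case: u => u hu; case: v => v hv /= E; subst v; congr L2; exact: Prop_irrelevance.
Qed.

HB.instance Definition _ := gen_eqMixin l2.
HB.instance Definition _ := gen_choiceMixin l2.

Definition l2zero : l2 := L2 (eq_ind_r (fun x => (x < +oo)%E) (ltry 0) (NP0 goodP2)).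
Definition l2add (u v : l2) : l2 :=
  L2 (NP_D_fin goodP2 (l2P u) (l2P v)).
Definition l2opp (u : l2) : l2 :=
  L2 (eq_ind_r (fun x => (x < +oo)%E) (l2P u) (NPN (l2v u) goodP2)).
Definition l2scale (a : R) (u : l2) : l2 := L2 (NP_Z_fin a goodP2 (l2P u)).

Lemma l2addA : associative l2add.
Proof. by move=> u v w; apply: l2_eq; apply/funext => x /=; rewrite addrA. Qed.
Lemma l2addC : commutative l2add.
Proof. by move=> u v; apply: l2_eq; apply/funext => x /=; rewrite addrC. Qed.
Lemma l2add0 : left_id l2zero l2add.
Proof. by move=> u; apply: l2_eq; apply/funext => x /=; rewrite add0r. Qed.
Lemma l2addN : left_inverse l2zero l2opp l2add.
Proof. by move=> u; apply: l2_eq; apply/funext => x /=; rewrite addNr. Qed.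

HB.instance Definition _ := GRing.isZmodule.Build l2 l2addA l2addC l2add0 l2addN.

Lemma l2scaleA a b (u : l2) : l2scale a (l2scale b u) = l2scale (a * b) u.
Proof. by apply: l2_eq; apply/funext => x /=; rewrite mulrA. Qed.
Lemma l2scale1 : left_id 1 l2scale.
Proof. by move=> u; apply: l2_eq; apply/funext => x /=; rewrite mul1r. Qed.
Lemma l2scaleDr : right_distributive l2scale +%R.
Proof. by move=> a u v; apply: l2_eq; apply/funext => x /=; rewrite mulrDr. Qed.
Lemma l2scaleDl (v : l2) : {morph l2scale^~ v : a b / a + b}.
Proof. by move=> a b; apply: l2_eq; apply/funext => x /=; rewrite mulrDl. Qed.

HB.instance Definition _ := GRing.Zmodule_isLmodule.Build R l2
  l2scaleA l2scale1 l2scaleDr l2scaleDl.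

Definition l2n (u : l2) : R := fine (NP P2 (l2v u)).

Lemma l2n_E (u : l2) : NP P2 (l2v u) = (l2n u)%:E.
Proof. exact: NP_fin goodP2 (l2P u). Qed.

Lemma l2n_D (u v : l2) : l2n (u + v) <= l2n u + l2n v.
Proof.
have := NP_D (l2v u) (l2v v) goodP2.
by rewrite -[X in (X <= _)%E]/(NP P2 (l2v (u + v))) !l2n_E -EFinD lee_fin.
Qed.

Lemma l2n_Z (a : R) (u : l2) : l2n (a *: u) = `|a| * l2n u.
Proof.
have := NP_Z a (l2v u) goodP2.
rewrite -[X in X = _ -> _]/(NP P2 (l2v (a *: u))) !l2n_E -EFinM.
by case.
Qed.

Lemma l2n_eq0 (u : l2) : l2n u = 0 -> u = 0.
Proof.
move=> h; apply: l2_eq; apply/funext => w /=.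
by apply: (NP_eq0 goodP2) ; rewrite l2n_E h.
Qed.

HB.instance Definition _ := Lmodule_isNormed.Build R l2 l2n_D l2n_Z l2n_eq0.

End l2sec.
Lemma eps_small (R : realType) (e : R) : 0 < e ->
  exists M, forall m, (M <= m)%N -> m.+1%:R^-1 < e.
Proof.
move=> e0; exists (Num.Def.trunc e^-1) => m Mm.
have h := truncnS_gt e^-1.
have h2 : (Num.Def.trunc e^-1).+1%:R <= m.+1%:R :> R by rewrite ler_nat ltnS.
rewrite -[e]invrK ltf_pV2 ?posrE ?invr_gt0 //; lra.
Qed.

Section l2complete.
Context {W : choiceType} {R : realType}.
Local Notation L := (@l2 W R).

Lemma l2_normE (u : L) : `|u| = l2n u.
Proof. by []. Qed.

Lemma l2_seq_complete (y : nat -> L) :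
  (forall e : R, 0 < e -> exists M, forall m n, (M <= m)%N -> (M <= n)%N -> `|y m - y n| < e) ->
  exists x : L, forall e : R, 0 < e -> exists M, forall n, (M <= n)%N -> `|y n - x| < e.
Proof.
move=> Hc.
have Hc' : forall e : R, 0 < e -> exists M, forall m n, (M <= m)%N -> (M <= n)%N ->
    (NP P2 (fun w => (l2v (y m) w - l2v (y n) w)%R) < e%:E)%E.
  move=> e e0; have [M HM] := Hc e e0; exists M => m n Mm Mn.
  have := HM m n Mm Mn; rewrite l2_normE -lte_fin -l2n_E; exact.
have [x Hx] := NP_complete goodP2 Hc'.
have [M HM] := Hx 1 ltr01.
have xfin : (NP P2 x < +oo)%E.
  have -> : x = (fun w => (fun w => - (l2v (y M) w - x w)) w + l2v (y M) w).
    by apply/funext => w /=; rewrite opprB subrK.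
  apply: NP_D_fin goodP2 _ (l2P (y M)).
  rewrite NPN; last exact: goodP2.
  by apply: lt_trans (HM M (leqnn _)) _; exact: ltry.
exists (L2 xfin) => e e0; have [K HK] := Hx e e0; exists K => n Kn.
rewrite l2_normE -lte_fin -l2n_E; exact: HK.
Qed.

Lemma l2_cauchy_cvg (F : set_system L) : ProperFilter F -> cauchy F -> cvg F.
Proof.
move=> FF /cauchyP Fc.
have : forall n : nat, exists x : L, F (ball x n.+1%:R^-1).
  by move=> n; apply: Fc; rewrite invr_gt0 ltr0Sn.
move=> /choice [y Hy].
have Hb : forall n (z : L), ball (y n) n.+1%:R^-1 z -> `|y n - z| < n.+1%:R^-1.
  by move=> n z; rewrite -ball_normE.
have [x Hx] : exists x : L, forall e : R, 0 < e -> exists M, forall n, (M <= n)%N -> `|y n - x| < e.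
  apply: l2_seq_complete => e e0.
  have e2 : 0 < e / 2 by rewrite divr_gt0.
  have [M HM] := eps_small e2; exists M => m n Mm Mn.
  have [z [zm zn]] : exists z : L, ball (y m) m.+1%:R^-1 z /\ ball (y n) n.+1%:R^-1 z
    := filter_ex (filterI (Hy m) (Hy n)).
  have := Hb _ _ zm; have := Hb _ _ zn; have := HM m Mm; have := HM n Mn.
  have := ler_distD z (y m) (y n); rewrite (distrC z (y n)) => h1 h2 h3 h4 h5.
  set a := (m.+1%:R^-1 : R) in h3 h5; set b := (n.+1%:R^-1 : R) in h2 h4; lra.
apply/cvg_ex; exists x; apply/cvgrPdist_lt => e e0.
have e2 : 0 < e / 2 by rewrite divr_gt0.
have [M1 H1] := eps_small e2; have [M2 H2] := Hx _ e2.
pose n := maxn M1 M2.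
have h1 := H1 n (leq_maxl _ _); have h2 := H2 n (leq_maxr _ _).
apply: filterS (Hy n) => z.
move=> /Hb hz.
have := ler_distD (y n) x z; rewrite (distrC x (y n)) => h3.
set b := (n.+1%:R^-1 : R) in h1 hz; lra.
Qed.

HB.instance Definition _ := Uniform_isComplete.Build L l2_cauchy_cvg.


End l2complete.
Section l2more.
Context {W : choiceType} {R : realType}.
Local Notation L := (@l2 W R).

Lemma NP_ext (P : set ((W -> R) -> R)) (u v : W -> R) :
  (forall w, u w = v w) -> NP P u = NP P v.
Proof. by move=> h; congr NP; apply/funext. Qed.

Lemma P2_le (u : W -> R) (s : R) : (NP P2 u <= s%:E)%E ->
  forall S, finite_set S -> \sum_(i \in S) u i ^+ 2 <= s ^+ 2.
Proof.
move=> /NP_le H S fS.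
have h := H (fun u => Num.sqrt (\sum_(i \in S) u i ^+ 2)) (ex_intro2 _ _ S fS erefl).
simpl in h.
have h0 : 0 <= \sum_(i \in S) u i ^+ 2 by apply: fsumr_ge0 => i _; exact: sqr_ge0.
have h1 := sqrtr_ge0 (\sum_(i \in S) u i ^+ 2).
rewrite -(sqr_sqrtr h0); nra.
Qed.

Lemma l2_AP (u : W -> R) (hu : (NP P2 u < +oo)%E) (e : R) : 0 < e ->
  exists S0, finite_set S0 /\ forall S, finite_set S -> S0 `<=` S ->
    fine (NP P2 u) ^+ 2 - e <= \sum_(i \in S) u i ^+ 2 <= fine (NP P2 u) ^+ 2.
Proof.
move=> e0; set s := fine (NP P2 u).
have hs : NP P2 u = s%:E by exact: NP_fin goodP2 hu.
have s0 : 0 <= s by rewrite -lee_fin -hs; exact: NP_ge0 goodP2.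
have hle' : forall S, finite_set S -> \sum_(i \in S) u i ^+ 2 <= s ^+ 2.
  by apply: P2_le; rewrite hs.
set dl := e / (2 * s + 1).
have dl0 : 0 < dl by rewrite divr_gt0 //; lra.
have edl : dl * (2 * s + 1) = e by rewrite /dl mulrVK // unitfE; apply/eqP; lra.
have : ((s - dl)%:E < NP P2 u)%E by rewrite hs lte_fin; lra.
move=> /ereal_sup_gtP [_ [p [S0 fS0 <-] <-]].
rewrite lte_fin /= => hS0.
exists S0; split => // S fS sub; apply/andP; split; last exact: hle'.
have h0 : 0 <= \sum_(i \in S0) u i ^+ 2 by apply: fsumr_ge0 => i _; exact: sqr_ge0.
set t := Num.sqrt _ in hS0.
have t0 : 0 <= t by exact: sqrtr_ge0.
have tt : t ^+ 2 = \sum_(i \in S0) u i ^+ 2 by rewrite sqr_sqrtr.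
have ts : t <= s.
  have := hle' S0 fS0; rewrite -tt => h; nra.
have mono : \sum_(i \in S0) u i ^+ 2 <= \sum_(i \in S) u i ^+ 2.
  by apply: fs_mono => // i _; exact: sqr_ge0.
rewrite -tt in mono.
have : s ^+ 2 - t ^+ 2 <= e.
  rewrite -edl; nra.
lra.
Qed.

Lemma c00_l2 (y : W -> R) : finite_set [set a | y a != 0] -> (NP P2 y < +oo)%E.
Proof.
move=> fK; set K := [set a | y a != 0] in fK.
apply: (@le_lt_trans _ _ (Num.sqrt (\sum_(i \in K) y i ^+ 2))%:E); last exact: ltry.
apply/NP_le => _ [S fS <-] /=.
apply: ler_wsqrtr.
apply: (@le_trans _ _ (\sum_(i \in S `|` K) y i ^+ 2)).
  apply: fs_mono; [by rewrite finite_setU | by move=> x hx; left | by move=> i _; exact: sqr_ge0].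
rewrite fs_split // [X in _ + X]fsbig1 ?addr0 // => i [_ /= h].
by move: h => /negP; rewrite negbK => /eqP ->; rewrite expr0n.
Qed.

Lemma l2_approx (u : W -> R) (hu : (NP P2 u < +oo)%E) (e : R) : 0 < e ->
  exists y : W -> R, finite_set [set a | y a != 0] /\ (NP P2 (fun w => (u w - y w)%R) < e%:E)%E.
Proof.
move=> e0.
have e2 : 0 < (e / 2) ^+ 2 by rewrite exprn_gt0 // divr_gt0.
have [S0 [fS0 HS0]] := l2_AP hu e2.
set s := fine (NP P2 u) in HS0.
pose y := fun w => if w \in S0 then u w else 0.
exists y; split.
  apply: sub_finite_set fS0 => w /=; rewrite /y.
  by case: ifPn => [/set_mem //|_]; rewrite eqxx.
apply: (@le_lt_trans _ _ (e / 2)%:E); last by rewrite lte_fin; lra.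
apply/NP_le => _ [S fS <-] /=.
have e20 : 0 <= e / 2 by rewrite divr_ge0 // ltW.
rewrite -(ger0_norm e20) -sqrtr_sqr; apply: ler_wsqrtr.
have fU : finite_set (S `|` S0) by rewrite finite_setU.
apply: (@le_trans _ _ (\sum_(i \in S `|` S0) (u i - y i) ^+ 2)).
  apply: fs_mono; [by [] | by move=> x hx; left | by move=> i _; exact: sqr_ge0].
rewrite fs_split // fsbig1; last first.
  by move=> i S0i; rewrite /y (mem_set S0i) subrr expr0n.
rewrite add0r.
have -> : \sum_(i \in S `\` S0) (u i - y i) ^+ 2 = \sum_(i \in S `\` S0) u i ^+ 2.
  apply: eq_fsbigr => i /set_mem [_ /= nS0].
  by rewrite /y ifF ?subr0 //; apply/negP => /set_mem.
have := HS0 _ fU (fun x h => or_intror h).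
rewrite fs_split // => /andP[_ h1].
have := HS0 _ fS0 (fun x h => h) => /andP[h2 _].
lra.
Qed.

Definition ip (u v : L) : R := (`|u + v| ^+ 2 - `|u - v| ^+ 2) / 4.

Lemma sig_E (u : L) S : finite_set S ->
  `| \sum_(i \in S) l2v u i ^+ 2 - `|u| ^+ 2 | <= 0 ->
  True.
Proof. by []. Qed.

Lemma l2_AP' (u : L) (e : R) : 0 < e ->
  exists S0, finite_set S0 /\ forall S, finite_set S -> S0 `<=` S ->
    `| \sum_(i \in S) l2v u i ^+ 2 - `|u| ^+ 2 | <= e.
Proof.
move=> e0; have [S0 [fS0 H]] := l2_AP (l2P u) e0.
exists S0; split => // S fS sub; have /andP[h1 h2] := H S fS sub.
rewrite -/(l2n u) -l2_normE in h1 h2.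
rewrite ler_norml; apply/andP; split; lra.
Qed.

Lemma ip_lin (a : R) (u v w : L) : ip (a *: u + v) w = a * ip u w + ip v w.
Proof.
rewrite /ip.
set z1 := a *: u + v + w; set z2 := a *: u + v - w.
set z3 := u + w; set z4 := u - w; set z5 := v + w; set z6 := v - w.
suff : `|z1| ^+ 2 - `|z2| ^+ 2 = a * (`|z3| ^+ 2 - `|z4| ^+ 2) + (`|z5| ^+ 2 - `|z6| ^+ 2).
  by move=> ->; rewrite /=; field.
set X := _ - _; set Y := _ + _.
suff : `|X - Y| <= 0 by rewrite normr_le0 subr_eq0 => /eqP.
apply/ler_addgt0Pr => e e0; rewrite add0r.
set c := 4 + 2 * `|a|.
have c0 : 0 < c by rewrite /c; have := normr_ge0 a; lra.
have ec : 0 < e / c by rewrite divr_gt0.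
have [S1 [f1 H1]] := l2_AP' z1 ec; have [S2 [f2 H2]] := l2_AP' z2 ec.
have [S3 [f3 H3]] := l2_AP' z3 ec; have [S4 [f4 H4]] := l2_AP' z4 ec.
have [S5 [f5 H5]] := l2_AP' z5 ec; have [S6 [f6 H6]] := l2_AP' z6 ec.
set S := S1 `|` S2 `|` S3 `|` S4 `|` S5 `|` S6.
have fS : finite_set S by rewrite /S !finite_setU; repeat split.
have s1 : S1 `<=` S by move=> x h; rewrite /S; do 5 left.
have s2 : S2 `<=` S by move=> x h; rewrite /S; do 4 left; right.
have s3 : S3 `<=` S by move=> x h; rewrite /S; do 3 left; right.
have s4 : S4 `<=` S by move=> x h; rewrite /S; do 2 left; right.
have s5 : S5 `<=` S by move=> x h; rewrite /S; left; right.
have s6 : S6 `<=` S by move=> x h; rewrite /S; right.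
have := H1 S fS s1; have := H2 S fS s2; have := H3 S fS s3.
have := H4 S fS s4; have := H5 S fS s5; have := H6 S fS s6.
have iden : \sum_(i \in S) l2v z1 i ^+ 2 - \sum_(i \in S) l2v z2 i ^+ 2 =
  a * (\sum_(i \in S) l2v z3 i ^+ 2 - \sum_(i \in S) l2v z4 i ^+ 2) +
  (\sum_(i \in S) l2v z5 i ^+ 2 - \sum_(i \in S) l2v z6 i ^+ 2).
  rewrite !fsbig_finite //.
  rewrite -!sumrB mulr_sumr -big_split /=; apply: eq_bigr => i _.
  rewrite /z1 /z2 /z3 /z4 /z5 /z6 /=; ring.
move: iden.
set t1 := \sum_(i \in S) l2v z1 i ^+ 2; set t2 := \sum_(i \in S) l2v z2 i ^+ 2.
set t3 := \sum_(i \in S) l2v z3 i ^+ 2; set t4 := \sum_(i \in S) l2v z4 i ^+ 2.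
set t5 := \sum_(i \in S) l2v z5 i ^+ 2; set t6 := \sum_(i \in S) l2v z6 i ^+ 2.
move=> iden h6 h5 h4 h3 h2 h1.
have ce : c * (e / c) = e by rewrite mulrC mulfVK // gt_eqF.
rewrite /X /Y.
set n1 := `|z1| ^+ 2 in h1 *; set n2 := `|z2| ^+ 2 in h2 *.
set n3 := `|z3| ^+ 2 in h3 *; set n4 := `|z4| ^+ 2 in h4 *.
set n5 := `|z5| ^+ 2 in h5 *; set n6 := `|z6| ^+ 2 in h6 *.
set d := e / c in h1 h2 h3 h4 h5 h6 ce.
have E : n1 - n2 - (a * (n3 - n4) + (n5 - n6)) = (n1 - t1) - (n2 - t2)
   + (a * (t3 - t4) - a * (n3 - n4)) + (t5 - n5) - (t6 - n6)
   + ((t1 - t2) - (a * (t3 - t4) + (t5 - t6))) by ring.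
rewrite iden subrr addr0 in E; rewrite E.
have hq : `|a * (t3 - t4) - a * (n3 - n4)| <= `|a| * (2 * d).
  have -> : a * (t3 - t4) - a * (n3 - n4) = a * ((t3 - n3) - (t4 - n4)) by ring.
  rewrite normrM ler_wpM2l //.
  apply: le_trans (ler_normB _ _) _.
  lra.
have key : `|a| * (2 * d) = e - 4 * d by rewrite -ce /c; ring.
rewrite key in hq.
move: hq h1 h2 h5 h6; set q := a * (t3 - t4) - a * (n3 - n4).
rewrite !ler_norml => /andP[q1 q2] /andP[a1 a2] /andP[b1 b2] /andP[c1 c2] /andP[d1 d2].
apply/andP; split; lra.
Qed.

End l2more.
Section mainsec.
Context {d : Order.disp_t} {W : orderType d} {R : realType}.

Definition gA : (W -> R) -> W -> R := fun u w => u w.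
Definition gD : (W -> R) -> W * W -> R := fun u p => u p.1 - u p.2.

Lemma NP_Pq_eq {I : choiceType} (F : set (set I)) (g : (W -> R) -> I -> R) u :
  NP (Pq F g) u = ereal_sup [set (Num.sqrt (\sum_(i \in S) (g u i) ^+ 2))%:E | S in F].
Proof.
rewrite /NP; congr ereal_sup; apply/seteqP; split => x /=.
  by case=> _ [S FS <-] <-; exists S.
by case=> S FS <-; exists (fun u => Num.sqrt (\sum_(i \in S) (g u i) ^+ 2)) => //; exists S.
Qed.

Lemma goodW_PD (D : set (set (W * W))) : D !=set0 -> (forall P, D P -> finite_set P) ->
  goodW (Pq D gD).
Proof.
move=> D0 Dfin; apply: goodPq => //.
- by move=> a u i; rewrite /gD mulrBr.
- by move=> u v i; rewrite /gD; ring.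
- move=> i; exists [:: i.1; i.2] => u; rewrite big_cons big_seq1 /gD.
  exact: ler_normB.
Qed.

Lemma goodP_PA (A : set (set W)) (w0 : W) : (forall S, A S -> finite_set S) ->
  (forall w, A [set w]) -> goodP (Pq A gA).
Proof.
move=> Afin A1.
have [h1 h2 h3 h4] : goodW (Pq A gA).
  apply: goodPq => //; first by exists [set w0].
  by move=> i; exists [:: i] => u; rewrite big_seq1.
split => // w; exists (fun u => Num.sqrt (\sum_(i \in [set w]) (gA u i) ^+ 2)).
  by exists [set w].
by move=> u; rewrite fsbig_set1 sqrtr_sqr.
Qed.

Lemma normAD_eq (A : set (set W)) (D : set (set (W * W))) (w0 : W) :
  (forall S, A S -> finite_set S) -> (forall w, A [set w]) ->
  D !=set0 -> (forall P, D P -> finite_set P) ->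
  @normAD _ W R A D = fun u => NP (Padd (Pq D gD) (Pq A gA)) u.
Proof.
move=> Afin A1 D0 Dfin; apply/funext => u.
rewrite NP_add; [|exact: goodW_PD|exact: goodP_PA].
by rewrite /normAD /nuD /normA !NP_Pq_eq.
Qed.

Lemma D_bound (S : set (W * W)) (f : W -> R) : finite_set S -> consecutive_pairs S ->
  \sum_(p \in S) (f p.1 - f p.2) ^+ 2 <=
  2 * \sum_(w \in [set p.1 | p in S] `|` [set p.2 | p in S]) f w ^+ 2.
Proof.
move=> fS [lt12 cons].
have inj1 : set_inj S fst.
  move=> p q /set_mem Sp /set_mem Sq e; apply: contrapT => npq.
  have h1 := lt12 p Sp; have h2 := lt12 q Sq.
  case: (cons p q Sp Sq npq) => h.
    by have := lt_trans h1 h; rewrite e ltxx.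
  by have := lt_trans h2 h; rewrite e ltxx.
have inj2 : set_inj S snd.
  move=> p q /set_mem Sp /set_mem Sq e; apply: contrapT => npq.
  have h1 := lt12 p Sp; have h2 := lt12 q Sq.
  case: (cons p q Sp Sq npq) => h.
    by have := lt_trans h h2; rewrite e ltxx.
  by have := lt_trans h h1; rewrite e ltxx.
rewrite fsbigU; first last.
- move=> x [[p Sp <-] [q Sq e]] /=.
  have h1 := lt12 p Sp; have h2 := lt12 q Sq.
  have [epq|npq] := pselect (p = q).
    by subst q; move: h1; rewrite -e ltxx.
  case: (cons p q Sp Sq npq) => h.
    by have := lt_trans (lt_trans h1 h) h2; rewrite e ltxx.
  by have := h; rewrite e ltxx.
- exact: finite_image.
- exact: finite_image.
rewrite (fsbig_image _ _ (fun w => f w ^+ 2) inj1) (fsbig_image _ _ (fun w => f w ^+ 2) inj2).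
rewrite mulrDr !mulr_fsumr -fsbig_split //.
rewrite !fsbig_finite //; apply: ler_sum => p _ /=.
rewrite -subr_ge0.
have -> : 2 * f p.1 ^+ 2 + 2 * f p.2 ^+ 2 - (f p.1 - f p.2) ^+ 2 = (f p.1 + f p.2) ^+ 2 by ring.
exact: sqr_ge0.
Qed.

End mainsec.
Section mainsec2.
Context {d : Order.disp_t} {W : orderType d} {R : realType}.

Lemma PX_le (A : set (set W)) (D : set (set (W * W))) (f : W -> R) :
  (forall S, A S -> finite_set S) ->
  (forall P, D P -> finite_set P /\ consecutive_pairs P) ->
  (NP (Padd (Pq D gD) (Pq A gA)) f <= 3%:E * NP P2 f)%E.
Proof.
move=> Afin Dcp.
have g0 := NP_ge0 f (@goodP2 W R).
case E: (NP P2 f) g0 => [s| |] g0; last by [].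
  have s0 : 0 <= s by rewrite -lee_fin.
  have hle : (NP P2 f <= s%:E)%E by rewrite E.
  have hK := P2_le hle.
  rewrite -EFinM; apply/NP_le => _ [p1 [p2 [[S1 DS1 <-] [S2 AS2 <-] ->]]] /=.
  have h2 : Num.sqrt (\sum_(i \in S2) gA f i ^+ 2) <= s.
    by apply: (NP_le _ _ _).1 hle _ (ex_intro2 _ _ S2 (Afin _ AS2) erefl).
  have [fS1 cS1] := Dcp _ DS1.
  have h1 : Num.sqrt (\sum_(i \in S1) gD f i ^+ 2) <= 2 * s.
    have h20 : 0 <= 2 * s by lra.
    rewrite -(ger0_norm h20) -sqrtr_sqr; apply: ler_wsqrtr.
    apply: le_trans (D_bound f fS1 cS1) _.
    have fK : finite_set ([set p.1 | p in S1] `|` [set p.2 | p in S1]).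
      by rewrite finite_setU; split; exact: finite_image.
    have h := hK _ fK.
    nra.
  lra.
by rewrite gt0_muley ?lte_fin //; exact: leey.
Qed.

End mainsec2.
Section banach.
Context {d : Order.disp_t} {W : orderType d} {R : realType}.
Implicit Types (P : set ((W -> R) -> R)).

Lemma NP_lin_bound P (a : R) (u v : W -> R) (r1 r2 : R) : goodP P ->
  (NP P u < r1%:E)%E -> (NP P v < r2%:E)%E ->
  (NP P (fun w => (a * u w + v w)%R) < (`|a| * r1 + r2)%:E)%E.
Proof.
move=> gP h1 h2.
apply: le_lt_trans (NP_D (fun w => a * u w) v gP) _.
rewrite NP_Z //.
have f1 : (NP P u < +oo)%E by apply: lt_trans h1 _; exact: ltry.
have f2 : (NP P v < +oo)%E by apply: lt_trans h2 _; exact: ltry.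
rewrite (NP_fin gP f1) (NP_fin gP f2) in h1 h2 *.
rewrite -EFinM -EFinD lte_fin; rewrite lte_fin in h1.
rewrite lte_fin in h2.
have : `|a| * fine (NP P u) <= `|a| * r1 by rewrite ler_wpM2l // ltW.
lra.
Qed.

Definition XP P : set (W -> R) :=
  [set x | (NP P x < +oo)%E /\ forall eps : R, 0 < eps ->
       exists y, c00 y /\ (NP P (fun w => (x w - y w)%R) < eps%:E)%E].

Lemma banach_NP P : goodP P -> banach_subspace (fun u => NP P u) (XP P).
Proof.
move=> gP; split.
  split; first by rewrite NP0 //; exact: ltry.
  move=> eps e0; exists (fun _ => 0); split.
    rewrite /c00 /=.
    have -> : [set a : W | (0 : R) != 0] = set0 by apply/seteqP; split => x //=; rewrite eqxx.
    exact: finite_set0.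
  rewrite (@NP_ext _ _ _ _ (fun _ => 0)); last by move=> w; rewrite subrr.
  by rewrite NP0 // lte_fin.
split.
  move=> a x y [xf xa] [yf ya]; split.
    by apply: NP_D_fin => //; apply: NP_Z_fin.
  move=> eps e0.
  have e2 : 0 < eps / 2 by rewrite divr_gt0.
  set e1 := eps / 2 / (`|a| + 1).
  have e10 : 0 < e1 by rewrite divr_gt0 // ltr_wpDl.
  have [y1 [c1 h1]] := xa e1 e10; have [y2 [c2 h2]] := ya _ e2.
  exists (fun w => a * y1 w + y2 w); split.
    apply: sub_finite_set (_ : _ `<=` [set w | y1 w != 0] `|` [set w | y2 w != 0]) _.
      move=> w /= h; apply: contrapT => /not_orP [/negP/negPn/eqP e1' /negP/negPn/eqP e2'].
      by move: h; rewrite e1' e2' mulr0 addr0 eqxx.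
    by rewrite finite_setU.
  rewrite (@NP_ext _ _ _ _ (fun w => a * (x w - y1 w) + (y w - y2 w))); last first.
    by move=> w; ring.
  apply: lt_le_trans (NP_lin_bound a gP h1 h2) _.
  rewrite lee_fin.
  have : e1 * (`|a| + 1) = eps / 2.
    by rewrite /e1 mulrVK // unitfE; apply/eqP; have := normr_ge0 a; lra.
  have := normr_ge0 a; nra.
split; first by move=> x [].
split; first by move=> x _ h w; exact: NP_eq0 gP h w.
split; first by move=> a x _; exact: NP_Z.
split; first by move=> x y _ _; exact: NP_D.
move=> u uX Hc; have [x Hx] := NP_complete gP Hc.
exists x; split => //.
split.
  have [M HM] := Hx 1 ltr01.
  have fu := (uX M).1.
  have hu : (NP P (u M) < (fine (NP P (u M)) + 1)%:E)%E.
    by rewrite {1}(NP_fin gP fu) lte_fin; lra.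
  rewrite (@NP_ext _ _ _ _ (fun w => -1 * (u M w - x w) + u M w)); last first.
    by move=> w; ring.
  apply: lt_trans (NP_lin_bound (-1) gP (HM M (leqnn _)) hu) _; exact: ltry.
move=> eps e0.
have e2 : 0 < eps / 2 by rewrite divr_gt0.
have [M HM] := Hx _ e2.
have [y [cy hy]] := (uX M).2 _ e2.
exists y; split => //.
rewrite (@NP_ext _ _ _ _ (fun w => -1 * (u M w - x w) + (u M w - y w))); last first.
  by move=> w; ring.
have := NP_lin_bound (-1) gP (HM M (leqnn _)) hy; rewrite normrN normr1 mul1r.
move=> h; apply: lt_le_trans h _; rewrite lee_fin; lra.
Qed.

End banach.
Theorem proposition2p6 (d : Order.disp_t) (W : orderType d) (R : realType)
  (A : set (set W)) (D : set (set (W * W))) :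
  is_omega1 W ->
  (forall S, A S -> finite_set S) ->
  (forall S T, A S -> T `<=` S -> A T) ->
  (forall a : W, A [set a]) ->
  (forall P, D P -> finite_set P /\ consecutive_pairs P) ->
  (forall a b : W, (a < b)%O -> D [set (a, b)]) ->
  banach_subspace (@normAD _ W R A D) (@XAD _ W R A D) /\
  hilbert_generated (@normAD _ W R A D) (@XAD _ W R A D).
Proof.
move=> [_ Hunc _] Afin _ A1 Dcp D2.
have [a [b ab]] : exists a b : W, (a < b)%O.
  apply: contrapT => H; apply: Hunc; apply: finite_set_countable.
  case: (pselect (exists w : W, True)) => [[w0 _]|nW].
    apply: (sub_finite_set _ (finite_set1 w0)) => w _ /=.
    have [h|h|->] := ltgtP w w0 => //; exfalso; apply: H.
      by exists w, w0.
    by exists w0, w.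
  apply: (sub_finite_set _ (finite_set0 W)) => w _; exfalso; apply: nW; by exists w.
have D0 : D !=set0 by exists [set (a, b)]; exact: D2.
have Dfin : forall P, D P -> finite_set P by move=> P /Dcp [].
have gPX : goodP (Padd (Pq D (@gD _ W R)) (Pq A (@gA _ W R))).
  exact: (goodPadd (@goodW_PD _ W R D D0 Dfin) (@goodP_PA _ W R A a Afin A1)).
have EX : @XAD _ W R A D = XP (Padd (Pq D (@gD _ W R)) (Pq A (@gA _ W R))).
  by rewrite /XAD (normAD_eq a Afin A1 D0 Dfin).
rewrite EX (normAD_eq a Afin A1 D0 Dfin).
split; first exact: banach_NP.
exists (@l2 W R : completeNormedModType R), (@ip W R); split.
  split.
  - move=> u v; rewrite /ip (addrC u v) (distrC u v) //.
  - by move=> c u v w; exact: ip_lin.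
  - move=> u; rewrite /ip subrr normr0 expr0n subr0 -mulr2n normrMn.
    have -> : (`|u| *+ 2) ^+ 2 / 4 = `|u| ^+ 2 by rewrite -mulr_natr; field.
    by rewrite sqrtr_sqr normr_id.
exists (fun u => l2v u); split.
- by [].
- exists 3 => u; apply: le_trans (PX_le _ Afin Dcp) _.
  by rewrite l2n_E -EFinM.
- move=> u; split.
    apply: le_lt_trans (PX_le _ Afin Dcp) _.
    by rewrite l2n_E -EFinM; exact: ltry.
  move=> eps e0.
  have e3 : 0 < eps / 3 by rewrite divr_gt0.
  have [y [cy hy]] := l2_approx (l2P u) e3.
  exists y; split => //.
  apply: le_lt_trans (PX_le _ Afin Dcp) _.
  have fy : (NP P2 (fun w => (l2v u w - y w)%R) < +oo)%E by apply: lt_trans hy _; exact: ltry.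
  rewrite (NP_fin goodP2 fy) in hy *; rewrite -EFinM lte_fin; rewrite lte_fin in hy; lra.
- move=> x [xf xa] eps e0; have [y [cy hy]] := xa eps e0.
  by exists (L2 (c00_l2 cy)).
Qed.
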